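(* Let $R=K[x_1,\ldots,x_n]$ be a polynomial ring over a field $K$, let $I\subset R$ be a monomial ideal, $t$ a positive integer, $\mathfrak{p}$ a monomial prime ideal of $R$, and $y_1,\ldots,y_s$ distinct variables of $R$ such that for each $i=1,\ldots,s$ we have $\mathfrak{p}\setminus y_i\notin \mathrm{Ass}(R/(I\setminus y_i)^t)$. Then $\mathfrak{p}\in\mathrm{Ass}(R/I^t)$ if and only if $\mathfrak{p}\in\mathrm{Ass}\big(R/(I^t:\prod_{i=1}^s y_i)\big)$.
   Context: For a monomial ideal $I\subset R$, $\mathcal{G}(I)$ denotes its unique minimal set of monomial generators. For a variable $x_i$, the deletion $I\setminus x_i$ is the monomial ideal of $R$ generated by those $u\in\mathcal{G}(I)$ with $x_i\nmid u$ (equivalently, obtained by setting $x_i=0$ in every minimal generator). In particular, for a monomial prime ideal $\mathfrak{p}$ (generated by a set of variables), $\mathfrak{p}\setminus x_i$ is the ideal generated by the variables of $\mathfrak{p}$ other than $x_i$. $\mathrm{Ass}(R/J)$ is the set of associated primes of $R/J$. *)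

(* Defs.v *)
From mathcomp Require Import all_boot all_algebra.
From mathcomp Require Import mpoly.
Set Implicit Arguments. Unset Strict Implicit. Unset Printing Implicit Defensive.
Import GRing.Theory.
Local Open Scope ring_scope.

Section MonomialIdeals.
Variables (n : nat) (K : fieldType).
Local Notation R := {mpoly K[n]}.

Definition subsetR := R -> Prop.

Definition ideal_gen (S : subsetR) : subsetR :=
  fun f => exists l : seq (R * R),
    (forall p, p \in l -> S p.2) /\ f = \sum_(p <- l) p.1 * p.2.

Definition is_ideal (J : subsetR) : Prop :=
  J 0 /\ (forall a b, J a -> J b -> J (a + b)) /\ (forall r a, J a -> J (r * a)).

Definition monideal (G : 'X_{1..n} -> Prop) : subsetR :=
  ideal_gen (fun f => exists m, G m /\ f = 'X_[m]).

Definition min_gens (I : subsetR) : 'X_{1..n} -> Prop :=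
  fun m => I 'X_[m] /\ (forall m', I 'X_[m'] -> lem m' m -> m' = m).

Definition deletion (I : subsetR) (i : 'I_n) : subsetR :=
  monideal (fun m => min_gens I m /\ m i = 0%N).

Definition ideal_mul (I J : subsetR) : subsetR :=
  ideal_gen (fun f => exists a b, I a /\ J b /\ f = a * b).

Fixpoint ideal_pow (I : subsetR) (t : nat) : subsetR :=
  match t with
  | 0 => ideal_gen (fun f => f = 1)
  | t'.+1 => ideal_mul (ideal_pow I t') I
  end.

Definition colon (J : subsetR) (f : R) : subsetR := fun g => J (g * f).

Definition is_prime_ideal (P : subsetR) : Prop :=
  is_ideal P /\ ~ P 1 /\ (forall a b, P (a * b) -> P a \/ P b).

Definition Ass (J : subsetR) (P : subsetR) : Prop :=
  is_prime_ideal P /\ exists f : R, forall g, P g <-> colon J f g.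

Definition var_prime (A : {set 'I_n}) : subsetR :=
  ideal_gen (fun f => exists i, i \in A /\ f = 'X_i).

End MonomialIdeals.

(* Main.v *)
Require Import Defs.
From mathcomp Require Import all_boot all_algebra.
From mathcomp Require Import mpoly.
From mathcomp Require Import ring zify.
From Stdlib Require Import Classical FunctionalExtensionality PropExtensionality.
Set Implicit Arguments. Unset Strict Implicit. Unset Printing Implicit Defensive.
Import GRing.Theory.
Local Open Scope ring_scope.

Section H.
Variables (n : nat) (K : fieldType).
Local Notation R := {mpoly K[n]}.
Implicit Types (S : subsetR n K) (M : 'X_{1..n} -> Prop).

Lemma ig_ideal S : is_ideal (ideal_gen S).
Proof.
split; [|split].
- by exists [::]; rewrite big_nil.
- move=> a b [l1 [H1 ->]] [l2 [H2 ->]]; exists (l1 ++ l2); split; last by rewrite big_cat.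
  by move=> p; rewrite mem_cat => /orP [/H1|/H2].
- move=> r a [l [H ->]]; exists [seq (r * p.1, p.2) | p <- l]; split.
  + by move=> p /mapP [q /H Hq ->].
  + by rewrite big_map mulr_sumr; apply: eq_bigr => p _; rewrite mulrA.
Qed.

Lemma ig_gen S x : S x -> ideal_gen S x.
Proof. by move=> Sx; exists [:: (1, x)]; split; [move=> p; rewrite inE => /eqP -> | rewrite big_seq1 mul1r]. Qed.

Lemma ideal_sum (J : subsetR n K) (T : eqType) (r : seq T) (F : T -> R) :
  is_ideal J -> (forall i, i \in r -> J (F i)) -> J (\sum_(i <- r) F i).
Proof.
move=> [J0 [JD JM]]; elim: r => [|x r IH] H; first by rewrite big_nil.
rewrite big_cons; apply: JD; first by apply: H; rewrite inE eqxx.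
by apply: IH => i Hi; apply: H; rewrite inE Hi orbT.
Qed.

Lemma ig_sub S (J : subsetR n K) f :
  is_ideal J -> (forall x, S x -> J x) -> ideal_gen S f -> J f.
Proof.
move=> HJ HS [l [Hl ->]]; apply: ideal_sum => // p Hp.
case: HJ => _ [_ JM]; apply: JM; apply: HS; apply: Hl.
done.
Qed.

Definition up M (m : 'X_{1..n}) := exists g, M g /\ (g <= m)%MM.

Lemma up_mono M a b : up M a -> (a <= b)%MM -> up M b.
Proof. by move=> [g [Mg gl]] ab; exists g; split => //; apply: lepm_trans ab. Qed.

Lemma up_self M g : M g -> up M g.
Proof. by move=> Mg; exists g; split => //; apply: lepm_refl. Qed.

Lemma msupp_zero : msupp (0 : R) = [::].
Proof. by apply/eqP; rewrite msupp_eq0. Qed.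

Lemma monideal_is_ideal M : is_ideal (monideal (K:=K) M).
Proof. exact: ig_ideal. Qed.

Lemma monideal_char M f :
  monideal (K:=K) M f <-> forall m, m \in msupp f -> up M m.
Proof.
split.
- apply: (ig_sub (J := fun f : R => forall m, m \in msupp f -> up M m)).
  + split; [|split].
    * by move=> m; rewrite msupp_zero.
    * move=> a b Ha Hb m /msuppD_le; rewrite mem_cat => /orP [/Ha|/Hb] //.
    * move=> r a Ha m /msuppM_le /allpairsP [[m1 m2] [/= _ /Ha H2 ->]].
      by apply: up_mono H2 _; apply: lem_addl.
  + move=> x [m [Mm ->]] m'; rewrite msuppX inE => /eqP ->; exact: up_self.
- move=> H; rewrite (mpolyE f); apply: ideal_sum; first exact: monideal_is_ideal.
  move=> m /H [g [Mg gm]].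
  rewrite -mul_mpolyC -(submK gm) mpolyXD mulrA.
  case: (monideal_is_ideal M) => _ [_ JM]; apply: JM; apply: ig_gen.
  by exists g.
Qed.

Lemma monideal_X M m : monideal (K:=K) M 'X_[m] <-> up M m.
Proof.
rewrite monideal_char; split; first by apply; rewrite msuppX inE.
by move=> H m'; rewrite msuppX inE => /eqP ->.
Qed.

Lemma monideal_colon M v g :
  monideal (K:=K) M (g * 'X_[v]) <-> forall m, m \in msupp g -> up M (v + m)%MM.
Proof.
rewrite monideal_char; split => H m Hm.
- by apply: H; rewrite (perm_mem (msuppMX _ _)); apply/mapP; exists m.
- by move: Hm; rewrite (perm_mem (msuppMX _ _)) => /mapP [m' Hm' ->]; apply: H.
Qed.

Fixpoint Mp M (t : nat) : 'X_{1..n} -> Prop :=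
  match t with
  | 0 => fun m => m = 0%MM
  | t'.+1 => fun m => exists a b, Mp M t' a /\ M b /\ m = (a + b)%MM
  end.

Lemma pow_eq M t : ideal_pow (monideal (K:=K) M) t = monideal (Mp M t).
Proof.
elim: t => [|t IH] /=.
- rewrite /monideal; congr ideal_gen; apply: functional_extensionality => f.
  apply: propositional_extensionality; split.
  + by move=> ->; exists 0%MM; rewrite mpolyX0.
  + by move=> [m [-> ->]]; rewrite mpolyX0.
- rewrite IH; apply: functional_extensionality => f.
  apply: propositional_extensionality; split.
  + apply: ig_sub; first exact: monideal_is_ideal.
    move=> x [a [b [Ha [Hb ->]]]]; apply/monideal_char => m.
    move/msuppM_le => /allpairsP [[m1 m2] [/= H1 H2 ->]].
    move/monideal_char: Ha => /(_ _ H1) [g1 [G1 l1]].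
    move/monideal_char: Hb => /(_ _ H2) [g2 [G2 l2]].
    exists (g1 + g2)%MM; split; first by exists g1, g2.
    apply/mnm_lepP => i; rewrite !mnmDE; apply: leq_add; [exact: (mnm_lepP l1) | exact: (mnm_lepP l2)].
  + apply: ig_sub; first exact: ig_ideal.
    move=> x [m [[a [b [Ha [Hb ->]]]] ->]]; apply: ig_gen.
    exists 'X_[a], 'X_[b]; split; first by apply: ig_gen; exists a.
    by split; [apply: ig_gen; exists b | rewrite mpolyXD].
Qed.

Definition MA (A : {set 'I_n}) : 'X_{1..n} -> Prop :=
  fun m => exists i, i \in A /\ m = U_(i)%MM.

Lemma var_prime_eq A : var_prime (K:=K) A = monideal (MA A).
Proof.
rewrite /monideal /var_prime; congr ideal_gen; apply: functional_extensionality => f.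
apply: propositional_extensionality; split.
- by move=> [i [iA ->]]; exists U_(i)%MM; split => //; exists i.
- by move=> [m [[i [iA ->]] ->]]; exists i.
Qed.

Lemma up_MA A m : up (MA A) m <-> exists i, i \in A /\ (0 < m i)%N.
Proof.
split.
- move=> [g [[i [iA ->]] /mnm_lepP /(_ i)]]; rewrite mnm1E eqxx => H.
  by exists i.
- move=> [i [iA Hi]]; exists U_(i)%MM; split; first by exists i.
  by apply/mnm_lepP => j; rewrite mnm1E; case: eqP => // <-.
Qed.

Lemma lt_mdeg (a b : 'X_{1..n}) : (a <= b)%MM -> a <> b -> (mdeg a < mdeg b)%N.
Proof.
move=> ab nab; rewrite -(submK ab) mdegD -{1}[mdeg a]add0n ltn_add2r lt0n mdeg_eq0.
apply/eqP => H; apply: nab; by rewrite -(submK ab) H add0m.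
Qed.

Lemma min_gens_up M d : min_gens (monideal (K:=K) M) d -> up M d.
Proof. by move=> [/monideal_X H _]. Qed.

Lemma min_exists M m : up M m -> exists d, min_gens (monideal (K:=K) M) d /\ (d <= m)%MM.
Proof.
have [k Hk] : exists k, (mdeg m < k)%N by exists (mdeg m).+1.
elim: k m Hk => [//|k IH] m Hk Hu.
case: (classic (min_gens (monideal (K:=K) M) m)) => Hmin.
  by exists m; split => //; apply: lepm_refl.
have : ~ (forall m', monideal (K:=K) M 'X_[m'] -> lem m' m -> m' = m).
  by move=> H; apply: Hmin; split => //; apply/monideal_X.
move/not_all_ex_not => [m' Hm'].
have [H1 Hm2] := imply_to_and _ _ Hm'.
have [H2 H3] := imply_to_and _ _ Hm2.
have := lt_mdeg H2 H3 => Hlt.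
have [d [Hd dm']] := IH m' (leq_trans Hlt Hk) (proj1 (monideal_X _ _) H1).
by exists d; split => //; apply: lepm_trans H2.
Qed.

Lemma up_mingens_var A (yy : 'I_n) m :
  up (fun m => min_gens (var_prime (K:=K) A) m /\ m yy = 0%N) m <->
  exists i, i \in A /\ i <> yy /\ (0 < m i)%N.
Proof.
rewrite var_prime_eq; split.
- move=> [g [[/min_gens_up /up_MA [i [iA gi]] gy] gm]].
  exists i; split => //; split; first by move=> E; move: gi; rewrite E gy.
  exact: leq_trans gi (mnm_lepP gm i).
- move=> [i [iA [iy mi]]]; exists U_(i)%MM; split; last first.
    by apply/mnm_lepP => j; rewrite mnm1E; case: eqP => // <-.
  split; last by rewrite mnm1E; case: eqP.
  split; first by apply/monideal_X/up_MA; exists i; rewrite mnm1E eqxx.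
  move=> m' /monideal_X /up_MA [j [jA m'j]] /mnm_lepP le.
  have ji : j = i.
    by move: (le j); rewrite mnm1E; case: eqP => // _; rewrite leqn0 => /eqP E; move: m'j; rewrite E.
  subst j; apply/mnmP => k; rewrite mnm1E; move: (le k); rewrite mnm1E.
  case: eqP => [<- | _]; last by rewrite leqn0 => /eqP.
  by move: m'j; case: (m' i) => [|[|]].
Qed.

Lemma supp_filt (r : seq 'X_{1..n}) (P : pred 'X_{1..n}) (c : 'X_{1..n} -> K) m :
  m \in msupp (\sum_(i <- r | P i) c i *: ('X_[i] : R)) -> P m.
Proof.
move/msupp_sum_le/flatten_mapP => [i]; rewrite mem_filter => /andP [Pi _].
by move/msuppZ_le; rewrite msuppX inE => /eqP ->.
Qed.

Lemma prime_mon M (B : pred 'I_n) :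
  (forall m, up M m <-> exists i, B i /\ (0 < m i)%N) ->
  is_prime_ideal (monideal (K:=K) M).
Proof.
move=> HB.
pose qb (m : 'X_{1..n}) := [exists i, B i && (0 < m i)%N].
have Jc : forall f, monideal (K:=K) M f <-> forall m, m \in msupp f -> qb m.
  move=> f; rewrite monideal_char; split => H m /H; rewrite HB.
  - by move=> [i [Bi mi]]; apply/existsP; exists i; rewrite Bi mi.
  - by move/existsP => [i /andP [Bi mi]]; exists i.
have [J0 [JD JM]] := monideal_is_ideal M.
have JB : forall x z, monideal (K:=K) M x -> monideal (K:=K) M z -> monideal (K:=K) M (x - z).
  by move=> x z Hx Hz; apply: JD => //; rewrite -mulN1r; apply: JM.
have dec : forall a : R, exists a1 a0, a = a1 + a0 /\ monideal (K:=K) M a1 /\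
     (forall m, m \in msupp a0 -> ~~ qb m).
  move=> a; exists (\sum_(m <- msupp a | qb m) a@_m *: 'X_[m]).
  exists (\sum_(m <- msupp a | ~~ qb m) a@_m *: 'X_[m]); split.
    by rewrite {1}(mpolyE a) (bigID qb) /=.
  split; first by apply/Jc => m /supp_filt.
  by move=> m /supp_filt.
split; first exact: monideal_is_ideal.
split.
  move/Jc => /(_ 0%MM); rewrite -mpolyX0 msuppX inE eqxx => /(_ isT) /existsP [i].
  by rewrite mnm0E andbF.
move=> a b Hab.
case: (classic (monideal (K:=K) M a)) => Ha; first by left.
case: (classic (monideal (K:=K) M b)) => Hb; first by right.
exfalso.
have [a1 [a0 [Ea [Ja1 Sa0]]]] := dec a.
have [b1 [b0 [Eb [Jb1 Sb0]]]] := dec b.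
have a0n : a0 != 0 by apply/eqP => E; apply: Ha; rewrite Ea E addr0.
have b0n : b0 != 0 by apply/eqP => E; apply: Hb; rewrite Eb E addr0.
have ab0 : a0 * b0 != 0 by rewrite mulf_neq0.
have Jab0 : monideal (K:=K) M (a0 * b0).
  have -> : a0 * b0 = a * b - (b * a1 + a0 * b1).
    by rewrite Ea Eb; ring.
  by apply: JB => //; apply: JD; apply: JM.
case E: (msupp (a0 * b0)) => [|m s].
  by move: ab0; rewrite (msuppnil0 E) eqxx.
have mS : m \in msupp (a0 * b0) by rewrite E inE eqxx.
move/Jc: Jab0 => /(_ _ mS) /existsP [i /andP [Bi]].
move: mS => /msuppM_le /allpairsP [[m1 m2] [/= H1 H2 ->]].
rewrite mnmDE addn_gt0 => /orP [] Hi.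
- by move: (Sa0 _ H1) => /negP; apply; apply/existsP; exists i; rewrite Bi Hi.
- by move: (Sb0 _ H2) => /negP; apply; apply/existsP; exists i; rewrite Bi Hi.
Qed.

Lemma Mp_liftQ (Q : 'X_{1..n} -> Prop) M1 M2 :
  (forall a b, Q (a + b)%MM -> Q a /\ Q b) ->
  (forall g, M2 g -> Q g -> up M1 g) ->
  forall t e, Mp M2 t e -> Q e -> up (Mp M1 t) e.
Proof.
move=> HQ H; elim=> [|t IH] e /=.
- by move=> -> _; exists 0%MM; split => //; apply: lepm_refl.
- move=> [a [b [Ha [Hb ->]]]] /HQ [Qa Qb].
  have [a' [Ha' la]] := IH _ Ha Qa.
  have [b' [Hb' lb]] := H _ Hb Qb.
  exists (a' + b')%MM; split; first by exists a', b'.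
  apply/mnm_lepP => i; rewrite !mnmDE; apply: leq_add; [exact: (mnm_lepP la) | exact: (mnm_lepP lb)].
Qed.

Lemma Mp_zero M (yy : 'I_n) :
  (forall d, M d -> d yy = 0%N) -> forall t e, Mp M t e -> e yy = 0%N.
Proof.
move=> H; elim=> [|t IH] e /=; first by move=> ->; rewrite mnm0E.
by move=> [a [b [Ha [Hb ->]]]]; rewrite mnmDE (IH _ Ha) (H _ Hb).
Qed.

Lemma list_W M A (S : seq 'X_{1..n}) :
  (forall m, m \in S -> exists w, up M (w + m)%MM /\ ~ up (MA A) w) ->
  exists W, (forall m, m \in S -> up M (W + m)%MM) /\ ~ up (MA A) W.
Proof.
elim: S => [|x S IH] H.
  by exists 0%MM; split => // /up_MA [i [_]]; rewrite mnm0E.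
have [W [HW nW]] := IH (fun m Hm => H m (mem_behead (s := x :: S) Hm)).
have [w [Hw nw]] := H x (mem_head _ _).
exists (W + w)%MM; split.
- move=> m; rewrite inE => /orP [/eqP ->|Hm].
  + apply: up_mono Hw _; apply/mnm_lepP => i; rewrite !mnmDE; lia.
  + apply: up_mono (HW _ Hm) _; apply/mnm_lepP => i; rewrite !mnmDE; lia.
- move/up_MA => [i [iA]]; rewrite mnmDE addn_gt0 => /orP [] Hi.
  + by apply: nW; apply/up_MA; exists i.
  + by apply: nw; apply/up_MA; exists i.
Qed.

Lemma step1 M A :
  Ass (monideal (K:=K) M) (monideal (K:=K) (MA A)) ->
  exists v, forall w, up (MA A) w <-> up M (v + w)%MM.
Proof.
move=> [_ [f Hf]].
have claim : exists m0, m0 \in msupp f /\ forall w, up M (w + m0)%MM -> up (MA A) w.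
  apply: NNPP => Hn.
  have [W [HW nW]] : exists W, (forall m, m \in msupp f -> up M (W + m)%MM) /\ ~ up (MA A) W.
    apply: list_W => m Hm; apply: NNPP => Hn2; apply: Hn; exists m; split => // w Hw.
    by apply: NNPP => Hw2; apply: Hn2; exists w.
  apply: nW; apply/monideal_X; apply/Hf; rewrite /colon mulrC.
  exact/monideal_colon.
have [m0 [Hm0 H0]] := claim.
exists m0 => w; split; last by rewrite addmC; apply: H0.
move=> /up_MA [i [iA wi]].
have : monideal (K:=K) (MA A) 'X_[U_(i)].
  by apply/monideal_X/up_MA; exists i; rewrite mnm1E eqxx.
move/Hf; rewrite /colon mulrC => /monideal_colon /(_ _ Hm0) Hu.
apply: up_mono Hu _; apply/mnm_lepP => j; rewrite !mnmDE mnm1E addnC.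
by apply: leq_add => //; case: eqP => // <-.
Qed.

Lemma prodX s (y : 'I_s -> 'I_n) (r : seq 'I_s) : injective y -> uniq r ->
  forall v : 'X_{1..n}, (forall k, k \in r -> 0 < v (y k))%N ->
  exists w, ('X_[v] : R) = 'X_[w] * \prod_(k <- r) 'X_(y k).
Proof.
move=> inj; elim: r => [|k r IH] /=.
  by move=> _ v _; exists v; rewrite big_nil mulr1.
move=> /andP [kr ur] v Hv.
have vk := Hv k (mem_head _ _).
have le : (U_(y k) <= v)%MM.
  by apply/mnm_lepP => j; rewrite mnm1E; case: eqP => // <-.
have [w Hw] : exists w, ('X_[v - U_(y k)] : R) = 'X_[w] * \prod_(k <- r) 'X_(y k).
  apply: IH => // k' Hk'; rewrite mnmBE mnm1E.
  have -> : (y k == y k') = false.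
    by apply/eqP => /inj E; move: kr; rewrite E Hk'.
  by rewrite subn0; apply: Hv; rewrite inE Hk' orbT.
exists w; rewrite -(submK le) mpolyXD Hw big_cons; ring.
Qed.

Lemma main (G : 'X_{1..n} -> Prop) (t : nat) (A : {set 'I_n})
    (s : nat) (y : 'I_s -> 'I_n) :
  (0 < t)%N ->
  injective y ->
  (forall i : 'I_s,
     ~ Ass (ideal_pow (deletion (monideal (K:=K) G) (y i)) t)
           (deletion (var_prime (K:=K) A) (y i))) ->
  (Ass (ideal_pow (monideal (K:=K) G) t) (var_prime (K:=K) A) <->
   Ass (colon (ideal_pow (monideal (K:=K) G) t) (\prod_(i < s) 'X_(y i)))
       (var_prime (K:=K) A)).
Proof.
move=> _ inj Hdel.
split; last first.
  move=> [Hp [f Hf]]; split => //; exists (f * \prod_(i < s) 'X_(y i)) => g.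
  by rewrite Hf /colon mulrA.
move=> HA.
have HA' := HA; rewrite pow_eq var_prime_eq in HA'.
have [v Hv] := step1 HA'.
have pos : forall k, (0 < v (y k))%N.
  move=> k; case E: (v (y k)) => [|x] //; exfalso; apply: (Hdel k).
  set yy := y k.
  rewrite /deletion pow_eq; split.
    apply: (prime_mon (B := fun i => (i \in A) && (i != yy))) => m.
    rewrite up_mingens_var; split.
    - by move=> [i [iA [iy mi]]]; exists i; rewrite iA mi; split => //; apply/eqP.
    - by move=> [i [/andP [iA /eqP iy] mi]]; exists i.
  exists 'X_[v] => g; rewrite /colon monideal_colon monideal_char.
  have DGup : forall d, (fun m => min_gens (monideal (K:=K) G) m /\ m yy = 0%N) d -> up G d.
    by move=> d [/min_gens_up].
  have DGz : forall d, (fun m => min_gens (monideal (K:=K) G) m /\ m yy = 0%N) d -> d yy = 0%N.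
    by move=> d [].
  suff pw : forall m, up (fun m => min_gens (var_prime (K:=K) A) m /\ m yy = 0%N) m <->
     up (Mp (fun m => min_gens (monideal (K:=K) G) m /\ m yy = 0%N) t) (v + m)%MM.
    by split => H m /H /pw.
  move=> m; rewrite up_mingens_var; split.
  - move=> [i [iA [iy mi]]].
    have : up (MA A) U_(i)%MM by apply/up_MA; exists i; rewrite mnm1E eqxx.
    move/Hv => [e [He le]].
    have ey : e yy = 0%N.
      move: (mnm_lepP le yy); rewrite mnmDE mnm1E E.
      by case: eqP => [/esym//|_]; rewrite leqn0 => /eqP.
    have Hup : up (Mp (fun m => min_gens (monideal (K:=K) G) m /\ m yy = 0%N) t) e.
      apply: (Mp_liftQ (Q := fun e => e yy = 0%N) (M2 := G)) He ey.
      + by move=> a b; rewrite mnmDE => /eqP; rewrite addn_eq0 => /andP [/eqP -> /eqP ->].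
      + move=> g0 Gg gy; have [d [Hd dg]] := min_exists (up_self Gg).
        exists d; split => //; split => //; move: (mnm_lepP dg yy); rewrite gy leqn0.
        by move/eqP.
    apply: up_mono Hup _; apply: lepm_trans le _.
    apply/mnm_lepP => j; rewrite !mnmDE mnm1E leq_add2l.
    by case: eqP => // <-.
  - move=> [d [Hd dl]].
    have dy := Mp_zero DGz Hd.
    have Hg : up (Mp G t) d.
      by apply: (Mp_liftQ (Q := fun _ => True) (M1 := G) _ (fun g Hg _ => DGup g Hg) Hd I).
    have : up (Mp G t) (v + (d - v))%MM.
      apply: up_mono Hg _; apply/mnm_lepP => j; rewrite !mnmDE mnmBE; lia.
    move/Hv/up_MA => [i [iA]]; rewrite mnmBE => Hi.
    exists i; split => //; split.
      by move=> ie; move: Hi; rewrite ie dy.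
    move: (mnm_lepP dl i); rewrite mnmDE; lia.
have [w Hw] := prodX inj (index_enum_uniq 'I_s) (fun k _ => pos k).
split; first exact: HA.1.
exists 'X_[w] => g; rewrite /colon -mulrA -Hw pow_eq var_prime_eq.
rewrite monideal_colon monideal_char; split => H m /H; by rewrite Hv.
Qed.
End H.

Theorem proposition2p1 (n : nat) (K : fieldType)
    (G : 'X_{1..n} -> Prop) (t : nat) (A : {set 'I_n})
    (s : nat) (y : 'I_s -> 'I_n) :
  (0 < t)%N ->
  injective y ->
  (forall i : 'I_s,
     ~ Ass (ideal_pow (deletion (monideal (K:=K) G) (y i)) t)
           (deletion (var_prime (K:=K) A) (y i))) ->
  (Ass (ideal_pow (monideal (K:=K) G) t) (var_prime (K:=K) A) <->
   Ass (colon (ideal_pow (monideal (K:=K) G) t) (\prod_(i < s) 'X_(y i)))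
       (var_prime (K:=K) A)).
Proof. exact: main. Qed.
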